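(* Let $\mathcal H(t)=\sum_{n\ge1}h_nt^n$, where $h_n$ is the number of bicoloured noncrossing configurations of size $n$. Then $$-t-t^2+(1-4t)\mathcal H(t)-3\mathcal H(t)^2=0.$$
   Context: For $n\ge2$, a bicoloured noncrossing configuration (BNC) of size $n$ is a regular polygon with vertices $1,\dots,n+1$ numbered clockwise, together with two disjoint sets of arcs, blue and red. The arcs are the pairs $(i,j)$, $1\le i<j\le n+1$: the edges are $(i,i+1)$, the base is $(1,n+1)$, and the others are diagonals. Coloured (blue or red) arcs must be pairwise noncrossing, where $(i,j)$ and $(k,l)$ cross iff $i<k<j<l$ or $k<i<l<j$. Every red arc must be a diagonal. Arcs in neither set are uncoloured. By convention there is exactly one BNC of size $1$. *)

(* Defs.v *)
From mathcomp Require Import all_boot all_order all_algebra.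
Set Implicit Arguments. Unset Strict Implicit. Unset Printing Implicit Defensive.
Import GRing.Theory Num.Theory.

(* Vertices of the polygon for size n are 1, ..., n+1; we use 'I_(n+2)
   (values 0..n+1) and only use values >= 1. *)
Definition vert (n : nat) := 'I_n.+2.
Definition pair_t (n : nat) := ('I_n.+2 * 'I_n.+2)%type.

Definition is_arc (n : nat) (a : pair_t n) : bool :=
  (1 <= nat_of_ord a.1)%N && (nat_of_ord a.1 < nat_of_ord a.2)%N.
Definition is_edge (n : nat) (a : pair_t n) : bool :=
  nat_of_ord a.2 == (nat_of_ord a.1).+1.
Definition is_base (n : nat) (a : pair_t n) : bool :=
  (nat_of_ord a.1 == 1%N) && (nat_of_ord a.2 == n.+1).
Definition is_diagonal (n : nat) (a : pair_t n) : bool :=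
  [&& is_arc a, ~~ is_edge a & ~~ is_base a].

Definition cross (n : nat) (a b : pair_t n) : bool :=
  let i := nat_of_ord a.1 in let j := nat_of_ord a.2 in
  let k := nat_of_ord b.1 in let l := nat_of_ord b.2 in
  [&& (i < k)%N, (k < j)%N & (j < l)%N] || [&& (k < i)%N, (i < l)%N & (l < j)%N].

Definition is_BNC (n : nat) (B R : {set pair_t n}) : bool :=
  [&& [forall a in B, is_arc a],
      [forall a in R, is_diagonal a],
      [disjoint B & R] &
      [forall a in B :|: R, forall b in B :|: R, ~~ cross a b]].

(* h_n = number of BNCs of size n (h_1 = 1 by convention; h_0 = 0 since the
   series starts at n = 1) *)
Definition h (n : nat) : nat :=
  match n with
  | 0 => 0
  | 1 => 1
  | _ => #|[set BR : {set pair_t n} * {set pair_t n} | is_BNC BR.1 BR.2]|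
  end.

Definition fps := nat -> int.
Definition fps_const (c : int) : fps := fun m => if m == 0%N then c else 0%R.
Definition fps_X : fps := fun m => if m == 1%N then 1%R else 0%R.
Definition fps_add (f g : fps) : fps := fun m => (f m + g m)%R.
Definition fps_opp (f : fps) : fps := fun m => (- f m)%R.
Definition fps_scale (c : int) (f : fps) : fps := fun m => (c * f m)%R.
Definition fps_mul (f g : fps) : fps :=
  fun m => (\sum_(i < m.+1) f i * g (m - i)%N)%R.
Definition fps_zero : fps := fun _ => 0%R.

Definition Hser : fps := fun m => Posz (h m).

(* Main.v *)
Require Import Defs.
From mathcomp Require Import all_boot all_order all_algebra zify.
From Stdlib Require Import FunctionalExtensionality.

Section Comb.
Variable n : nat.
Local Notation T := (pair_t n).
Local Notation Conf := ({set T} * {set T})%type.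

Definition cl (BR : Conf) : {set T} := BR.1 :|: BR.2.
Definition within (a b : nat) (C : {set T}) :=
  [forall x in C, (a <= nat_of_ord x.1) && (nat_of_ord x.2 <= b)].
Definition ep (a c : nat) : T := (inord a, inord c).
Definition Wset a c := [set BR : Conf | is_BNC BR.1 BR.2 && within a c (cl BR)].
Definition Nset a c := [set BR in Wset a c | ep a c \notin cl BR].
Definition WBset a c := [set BR in Wset a c | ep a c \in BR.1].
Definition WRset a c := [set BR in Wset a c | ep a c \in BR.2].
Definition Pset a j := [set BR in Wset a j | (j == a.+1) || (ep a j \in cl BR)].

Lemma BNCP (B R : {set T}) : reflect
  [/\ forall x, x \in B -> is_arc x, forall x, x \in R -> is_diagonal x,
      forall x, x \in B -> x \notin R &
      forall x y, x \in B :|: R -> y \in B :|: R -> ~~ cross x y] (is_BNC B R).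
Proof.
rewrite /is_BNC disjoint_subset.
apply: (iffP and4P) => [[/forall_inP h1 /forall_inP h2 /subsetP h3 /forall_inP h4]|[h1 h2 h3 h4]].
  split => //; try (by move=> x xB; move: (h3 x xB); rewrite inE).
  by move=> x y xC yC; move/forall_inP: (h4 x xC); apply.
split; try (apply/forall_inP => //).
- by apply/subsetP => x xB; rewrite inE; apply: h3.
- by move=> x xC; apply/forall_inP => y yC; apply: h4.
Qed.

Lemma withinP a b (C : {set T}) :
  reflect (forall x, x \in C -> a <= nat_of_ord x.1 /\ nat_of_ord x.2 <= b) (within a b C).
Proof.
apply: (iffP forall_inP) => h x xC; first by case/andP: (h x xC).
by case: (h x xC) => -> ->.
Qed.

Lemma ep1 a c : a <= n.+1 -> nat_of_ord (ep a c).1 = a.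
Proof. by move=> h; rewrite /= inordK. Qed.
Lemma ep2 a c : c <= n.+1 -> nat_of_ord (ep a c).2 = c.
Proof. by move=> h; rewrite /= inordK. Qed.

Lemma eqepE a c (x : T) : a <= n.+1 -> c <= n.+1 ->
  (x == ep a c) = (nat_of_ord x.1 == a) && (nat_of_ord x.2 == c).
Proof.
move=> ha hc; case: x => x1 x2.
by rewrite xpair_eqE -!val_eqE /= !inordK.
Qed.

Lemma arc_of (B R : {set T}) (x : T) : is_BNC B R -> x \in B :|: R ->
  1 <= nat_of_ord x.1 /\ nat_of_ord x.1 < nat_of_ord x.2.
Proof.
case/BNCP=> h1 h2 _ _; case/setUP => [/h1|/h2].
  by case/andP=> -> ->.
by case/and3P => /andP[-> ->].
Qed.

Lemma BNC_sub (B R B' R' : {set T}) : is_BNC B R -> B' \subset B -> R' \subset R -> is_BNC B' R'.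
Proof.
case/BNCP=> h1 h2 h3 h4 /subsetP sB /subsetP sR; apply/BNCP; split.
- by move=> x /sB /h1.
- by move=> x /sR /h2.
- by move=> x /sB /h3; apply: contra => /sR.
- move=> x y xC yC; apply: h4.
  + by case/setUP: xC => [/sB|/sR]; rewrite inE => ->; rewrite ?orbT.
  + by case/setUP: yC => [/sB|/sR]; rewrite inE => ->; rewrite ?orbT.
Qed.


Lemma nocross_ep a c (y : T) : a <= n.+1 -> c <= n.+1 ->
  a <= nat_of_ord y.1 -> nat_of_ord y.2 <= c ->
  ~~ cross (ep a c) y && ~~ cross y (ep a c).
Proof.
move=> ha hc h1 h2; rewrite /cross ep1 // ep2 //.
apply/andP; split; apply/negP; lia.
Qed.

Lemma cross_irr (x : T) : ~~ cross x x.
Proof. rewrite /cross; apply/negP; lia. Qed.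

Lemma memU1 (e x : T) (B R : {set T}) :
  (x \in (e |: B) :|: R) = (x == e) || (x \in B :|: R).
Proof. by rewrite !inE orbA. Qed.

Lemma memU1r (e x : T) (B R : {set T}) :
  (x \in B :|: (e |: R)) = (x == e) || (x \in B :|: R).
Proof. by rewrite !inE orbCA. Qed.

Lemma add_ok a c (B R : {set T}) (red : bool) :
  1 <= a < c -> c <= n.+1 -> is_BNC B R -> within a c (B :|: R) ->
  ep a c \notin B :|: R -> (red -> is_diagonal (ep a c)) ->
  is_BNC (if red then B else ep a c |: B) (if red then ep a c |: R else R).
Proof.
move=> /andP[a1 ac] cn /BNCP[h1 h2 h3 h4] /withinP hw he hd.
have an : a <= n.+1 by lia.
have nce : forall y, y \in B :|: R -> ~~ cross (ep a c) y && ~~ cross y (ep a c).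
  by move=> y /hw [y1 y2]; apply: nocross_ep.
have eB : ep a c \notin B by move: he; rewrite inE negb_or => /andP[].
have eR : ep a c \notin R by move: he; rewrite inE negb_or => /andP[].
have crossok : forall x y, (x == ep a c) || (x \in B :|: R) ->
   (y == ep a c) || (y \in B :|: R) -> ~~ cross x y.
  move=> x y /orP[/eqP->|xC] /orP[/eqP->|yC].
  - exact: cross_irr.
  - by case/andP: (nce y yC).
  - by case/andP: (nce x xC).
  - exact: h4.
case: red hd => hd; apply/BNCP; split.
- exact: h1.
- move=> x; rewrite in_setU1 => /orP[/eqP->|]; [exact: hd| exact: h2].
- move=> x xB; rewrite in_setU1 negb_or (h3 x xB) andbT; apply/negP => /eqP ex.
  by move: eB; rewrite -ex xB.
- by move=> x y; rewrite !memU1r; apply: crossok.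
- move=> x; rewrite in_setU1 => /orP[/eqP->|]; last exact: h1.
  by rewrite /is_arc ep1 // ep2 //; lia.
- exact: h2.
- move=> x; rewrite in_setU1 => /orP[/eqP->|]; [by [] | exact: h3].
- by move=> x y; rewrite !memU1; apply: crossok.
Qed.


Lemma within_sub a c (C D : {set T}) : D \subset C -> within a c C -> within a c D.
Proof. by move=> /subsetP s /withinP h; apply/withinP => x /s /h. Qed.

Lemma within_ep a c (C : {set T}) : a <= n.+1 -> c <= n.+1 ->
  within a c C -> within a c (ep a c |: C).
Proof.
move=> ha hc /withinP h; apply/withinP => x; rewrite in_setU1 => /orP[/eqP->|/h //].
by rewrite ep1 // ep2.
Qed.

Lemma card_WB a c : 1 <= a < c -> c <= n.+1 -> #|WBset a c| = #|Nset a c|.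
Proof.
move=> hac hc; have ha : a <= n.+1 by lia.
set e := ep a c.
have -> : WBset a c = (fun BR : Conf => (e |: BR.1, BR.2)) @: Nset a c.
  apply/setP => [[B R]]; rewrite !inE /=; apply/idP/imsetP.
  - case/andP => /andP[hv hw] he; exists (B :\ e, R).
      rewrite !inE /=; apply/andP; split; first (apply/andP; split).
      + by apply: BNC_sub hv _ _ => //; apply: subsetDl.
      + by apply: within_sub hw; apply: setSU; apply: subsetDl.
      + by rewrite /e eqxx /=; move/BNCP: hv => [_ _ h3 _]; apply: h3.
    by rewrite setD1K.
  - case=> [[B' R']]; rewrite !inE /= => /andP[/andP[hv hw] he0] [-> ->].
    have he : e \notin B' :|: R' by rewrite inE.
    rewrite setU11 andbT; apply/andP; split.
      exact: (@add_ok a c B' R' false).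
    by rewrite /cl /= -setUA; apply: within_ep.
apply: card_in_imset => [[B1 R1]] [[B2 R2]]; rewrite !inE /=.
move=> /andP[_ h1] /andP[_ h2] [e1 ->].
move: h1 h2; rewrite !negb_or => /andP[h1 _] /andP[h2 _].
by rewrite -(setU1K h1) e1 setU1K.
Qed.

Lemma card_WR a c : 1 <= a < c -> c <= n.+1 ->
  #|WRset a c| = if is_diagonal (ep a c) then #|Nset a c| else 0.
Proof.
move=> hac hc; have ha : a <= n.+1 by lia.
set e := ep a c.
case hd: (is_diagonal e); last first.
  apply/eqP; rewrite cards_eq0; apply/eqP/setP => [[B R]]; rewrite !inE /=.
  apply/negP => /andP[/andP[/BNCP[_ h2 _ _] _] /h2]; by rewrite hd.
have -> : WRset a c = (fun BR : Conf => (BR.1, e |: BR.2)) @: Nset a c.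
  apply/setP => [[B R]]; rewrite !inE /=; apply/idP/imsetP.
  - case/andP => /andP[hv hw] he; exists (B, R :\ e).
      rewrite !inE /=; apply/andP; split; first (apply/andP; split).
      + by apply: BNC_sub hv _ _ => //; apply: subsetDl.
      + by apply: within_sub hw; apply: setUS => //; apply: subsetDl.
      + rewrite /e eqxx /= orbF; move/BNCP: hv => [_ _ h3 _]; by apply/negP => /h3; rewrite he.
    by rewrite setD1K.
  - case=> [[B' R']]; rewrite !inE /= => /andP[/andP[hv hw] he0] [-> ->].
    have he : e \notin B' :|: R' by rewrite inE.
    rewrite setU11 andbT; apply/andP; split.
      exact: (@add_ok a c B' R' true).
    by rewrite /cl /= setUCA; apply: within_ep.
apply: card_in_imset => [[B1 R1]] [[B2 R2]]; rewrite !inE /=.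
move=> /andP[_ h1] /andP[_ h2] [-> e1].
move: h1 h2; rewrite !negb_or => /andP[_ h1] /andP[_ h2].
by rewrite -(setU1K h1) e1 setU1K.
Qed.


Lemma card_sep (X : finType) (A : {set X}) (p : pred X) :
    #|A| = #|[set x in A | p x]| + #|[set x in A | ~~ p x]|.
Proof.
rewrite -(cardsID [set x | p x] A).
have -> : A :&: [set x | p x] = [set x in A | p x] by apply/setP=> x; rewrite !inE.
by have -> : A :\: [set x | p x] = [set x in A | ~~ p x] by apply/setP=> x; rewrite !inE andbC.
Qed.

Arguments card_sep {X}.

Lemma card_Wsplit a c : #|Wset a c| = #|Nset a c| + #|WBset a c| + #|WRset a c|.
Proof.
have cs := @card_sep Conf.

rewrite (cs (Wset a c) (fun BR => ep a c \in BR.1)).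
rewrite (cs [set x in Wset a c | ~~ (ep a c \in x.1)] (fun BR => ep a c \in BR.2)).
have -> : [set x in [set x in Wset a c | ~~ (ep a c \in x.1)] | ep a c \in x.2] = WRset a c.
  apply/setP => [[B R]]; rewrite !inE /=; apply/idP/idP => [/andP[/andP[-> _] ->] // | /andP[/andP[hv hw] hR]].
  rewrite hv hw hR /= andbT; case/BNCP: hv => _ _ h3 _; apply/negP => /h3; by rewrite hR.
have -> : [set x in [set x in Wset a c | ~~ (ep a c \in x.1)] | ~~ (ep a c \in x.2)] = Nset a c.
  by apply/setP => [[B R]]; rewrite !inE /= negb_or andbA.
have -> : [set x in Wset a c | ep a c \in x.1] = WBset a c by [].
by rewrite [#|Nset a c| + _]addnC -addnA [#|Nset a c| + _]addnC.
Qed.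


Lemma card_N1 a : 1 <= a -> a < n.+1 -> #|Nset a a.+1| = 1.
Proof.
move=> a1 an.
have -> : Nset a a.+1 = [set (set0, set0)].
  apply/setP => [[B R]]; rewrite !inE /=; apply/idP/eqP.
  - case/andP => /andP[hv /withinP hw] he.
    have cl0 : forall x, x \in B :|: R -> False.
      move=> x xC; have [h1 h2] := hw x xC; have [h3 h4] := arc_of _ _ _ hv xC.
      have : x == ep a a.+1.
        rewrite eqepE; try lia. move: h1 h2 h3 h4; case: (x) => x1 x2 /= *. apply/andP; split; apply/eqP; lia.
      by move/eqP => ex; move: he; rewrite -ex; move: xC; rewrite inE => ->.
    congr pair; apply/setP => x; rewrite inE; apply/negP => xB; apply: (cl0 x);
      by rewrite inE xB ?orbT.
  - case=> -> ->; rewrite /cl setU0 inE andbT; apply/andP; split.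
      by apply/BNCP; split => x; rewrite ?inE.
    by apply/withinP => x; rewrite inE.
by rewrite cards1.
Qed.

Lemma card_P a j : 1 <= a < j -> j <= n.+1 ->
  #|Pset a j| = if j == a.+1 then #|Wset a j| else #|WBset a j| + #|WRset a j|.
Proof.
move=> haj hj; case: eqP => [->|hne].
  suff -> : Pset a a.+1 = Wset a a.+1 by []. by apply/setP => BR; rewrite !inE eqxx andbT.
have := card_Wsplit a j; rewrite (card_sep (Wset a j) (fun BR => ep a j \in cl BR)).
have -> : [set x in Wset a j | ~~ (ep a j \in cl x)] = Nset a j by [].
have -> : [set x in Wset a j | ep a j \in cl x] = Pset a j.
  by apply/setP => BR; rewrite !inE; case: eqP.
by move=> H; lia.
Qed.


Lemma memcl (B R : {set T}) x : (x \in cl (B, R)) = (x \in B) || (x \in R).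
Proof. by rewrite /cl inE. Qed.

Lemma inW a c (BR : Conf) x : BR \in Wset a c -> x \in cl BR ->
  [/\ 1 <= nat_of_ord x.1, nat_of_ord x.1 < nat_of_ord x.2,
      a <= nat_of_ord x.1 & nat_of_ord x.2 <= c].
Proof.
case: BR => B R; rewrite inE => /andP[hv /withinP hw] xC.
have [h1 h2] := hw x xC; have [h3 h4] := arc_of _ _ _ hv xC.
by move: h1 h2 h3 h4; case: (x) => x1 x2 /= *; split.
Qed.

Lemma union_ok a j b (p q : Conf) : p \in Wset a j -> q \in Wset j b ->
  is_BNC (p.1 :|: q.1) (p.2 :|: q.2).
Proof.
move=> hp hq.
have Wp := fun x => @inW a j p x hp. have Wq := fun x => @inW j b q x hq.
move: hp hq; case: p Wp => B1 R1 Wp; case: q Wq => B2 R2 Wq.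
rewrite !inE /= => /andP[/BNCP[h1 h2 h3 h4] _] /andP[/BNCP[k1 k2 k3 k4] _].
apply/BNCP; split.
- by move=> x; rewrite inE => /orP[/h1|/k1].
- by move=> x; rewrite inE => /orP[/h2|/k2].
- move=> x; rewrite !inE negb_or => /orP[xB|xB]; apply/andP; split.
  + exact: h3.
  + apply/negP => xR.
    have c1 : x \in cl (B1, R1) by rewrite memcl xB.
    have c2 : x \in cl (B2, R2) by rewrite memcl xR orbT.
    have [_ _ _ e1] := Wp x c1; have [_ e2 e3 _] := Wq x c2.
    by move: e1 e2 e3; case: (x) => x1 x2 /= *; lia.
  + apply/negP => xR.
    have c1 : x \in cl (B1, R1) by rewrite memcl xR orbT.
    have c2 : x \in cl (B2, R2) by rewrite memcl xB.
    have [_ _ _ e1] := Wp x c1; have [_ e2 e3 _] := Wq x c2.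
    by move: e1 e2 e3; case: (x) => x1 x2 /= *; lia.
  + exact: k3.
- have sep : forall x y, x \in cl (B1, R1) -> y \in cl (B2, R2) -> ~~ cross x y && ~~ cross y x.
    move=> x y xC yC; have [_ e1 _ e2] := Wp x xC; have [_ e3 e4 _] := Wq y yC.
    move: e1 e2 e3 e4; case: (x) => x1 x2; case: (y) => y1 y2 /= *.
    rewrite /cross /=; apply/andP; split; apply/negP; lia.
  have cU : forall x, x \in (B1 :|: B2) :|: (R1 :|: R2) -> x \in cl (B1, R1) \/ x \in cl (B2, R2).
    move=> x; rewrite /cl !inE; case/orP => /orP[] ->; rewrite /= ?orbT; by [left|right].
  move=> x y /cU [xC|xC] /cU [yC|yC].
  + exact: h4.
  + by case/andP: (sep x y xC yC).
  + by case/andP: (sep y x yC xC).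
  + exact: k4.
Qed.


Definition Jf a (BR : Conf) :=
  maxn a.+1 (\max_(x in cl BR | nat_of_ord x.1 == a) nat_of_ord x.2).

Lemma Jf_eq a j BR : a < j -> j <= n.+1 -> (j == a.+1) || (ep a j \in cl BR) ->
  (forall x, x \in cl BR -> nat_of_ord x.1 = a -> nat_of_ord x.2 <= j) -> Jf a BR = j.
Proof.
move=> aj jn hj hx; have an : a <= n.+1 by lia.
apply/eqP; rewrite eqn_leq geq_max aj /=; apply/andP; split.
  by apply/bigmax_leqP => x /andP[xC /eqP e]; exact: hx x xC e.
case/orP: hj => [/eqP->|he]; first exact: leq_maxl.
apply: leq_trans (leq_maxr _ _); apply: (bigmax_sup (ep a j)).
  by rewrite he ep1 // eqxx.
by rewrite ep2.
Qed.

Lemma Jf_spec a b BR : 1 <= a -> a.+1 < b -> b <= n.+1 -> BR \in Nset a b ->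
  [/\ a < Jf a BR < b, (Jf a BR == a.+1) || (ep a (Jf a BR) \in cl BR) &
      forall x, x \in cl BR -> nat_of_ord x.1 = a -> nat_of_ord x.2 <= Jf a BR].
Proof.
move=> a1 ab bn hN.
have hW : BR \in Wset a b by move: hN; rewrite inE => /andP[].
have he : ep a b \notin cl BR by move: hN; rewrite inE => /andP[].
have an : a <= n.+1 by lia.
split.
- rewrite /Jf leq_max ltnSn /= gtn_max ab /=.
  have : \max_(x in cl BR | nat_of_ord x.1 == a) nat_of_ord x.2 <= b.-1; last by move=> H; apply: leq_ltn_trans H _; lia.
  apply/bigmax_leqP => x /andP[xC /eqP x1].
  have [_ _ _ x2] := inW _ _ _ x hW xC.
  have : nat_of_ord x.2 != b.
    apply/negP => /eqP x2b; move: he; suff -> : ep a b = x by rewrite xC.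
    by apply/esym/eqP; rewrite eqepE // x1 x2b !eqxx.
  by lia.
- case: (leqP (\max_(x in cl BR | nat_of_ord x.1 == a) nat_of_ord x.2) a.+1) => hM.
    by rewrite /Jf (maxn_idPl hM) eqxx.
  case: (pickP (fun x : T => (x \in cl BR) && (nat_of_ord x.1 == a))) => [x0 Px0|none]; last first.
    by move: hM; rewrite big_pred0.
  move: hM; rewrite /Jf (bigmax_eq_arg x0 Px0); case: arg_maxnP => // y /andP[yC /eqP y1] _ hy.
  rewrite (maxn_idPr (ltnW hy)).
  suff -> : ep a (nat_of_ord y.2) = y by rewrite yC orbT.
  have y2 : nat_of_ord y.2 <= n.+1 by case: (y) => y' [y'' hy''] /=; lia.
  by apply/esym/eqP; rewrite eqepE // y1 !eqxx.
- move=> x xC x1; apply: leq_trans (leq_maxr _ _).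
  by apply: (leq_bigmax_cond x); rewrite xC x1 eqxx.
Qed.


Definition gU (pq : Conf * Conf) : Conf := (pq.1.1 :|: pq.2.1, pq.1.2 :|: pq.2.2).

Lemma clU (B1 R1 B2 R2 : {set T}) x :
  (x \in cl (gU ((B1, R1), (B2, R2)))) = (x \in cl (B1, R1)) || (x \in cl (B2, R2)).
Proof.
rewrite /cl /gU /= !inE.
by case: (x \in B1); case: (x \in B2); case: (x \in R1); case: (x \in R2).
Qed.

Lemma sepW a j b (B1 R1 B2 R2 : {set T}) : (B1, R1) \in Wset a j -> (B2, R2) \in Wset j b ->
  [/\ B1 = [set x in B1 :|: B2 | nat_of_ord x.2 <= j],
      R1 = [set x in R1 :|: R2 | nat_of_ord x.2 <= j],
      B2 = [set x in B1 :|: B2 | j < nat_of_ord x.2] &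
      R2 = [set x in R1 :|: R2 | j < nat_of_ord x.2]].
Proof.
move=> hp hq.
have L : forall x, x \in B1 :|: R1 -> nat_of_ord x.2 <= j.
  by move=> x xC; have [_ _ _ ?] := inW _ _ _ x hp xC.
have Rr : forall x, x \in B2 :|: R2 -> j < nat_of_ord x.2.
  move=> x xC; have [_ e1 e2 _] := inW _ _ _ x hq xC.
  by move: e1 e2; case: (x) => x1 x2 /= *; lia.
split; apply/setP => x; rewrite !inE.
- case xB1: (x \in B1) => /=; first by rewrite L // inE xB1.
  by case xB2: (x \in B2) => //=; rewrite leqNgt Rr // inE xB2.
- case xB1: (x \in R1) => /=; first by rewrite L // inE xB1 orbT.
  by case xB2: (x \in R2) => //=; rewrite leqNgt Rr // inE xB2 orbT.
- case xB2: (x \in B2) => /=; first by rewrite Rr ?orbT // inE xB2.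
  by case xB1: (x \in B1) => //=; rewrite ltnNge L // inE xB1.
- case xB2: (x \in R2) => /=; first by rewrite Rr ?orbT // inE xB2 orbT.
  by case xB1: (x \in R1) => //=; rewrite ltnNge L // inE xB1 orbT.
Qed.


Lemma card_S a j b : 1 <= a -> a < j < b -> b <= n.+1 ->
  #|[set BR in Nset a b | Jf a BR == j]| = #|Pset a j| * #|Wset j b|.
Proof.
move=> a1 ajb bn; have jn : j <= n.+1 by lia.
have an : a <= n.+1 by lia.
rewrite -cardsX.
have -> : [set BR in Nset a b | Jf a BR == j] = gU @: setX (Pset a j) (Wset j b).
  apply/setP => BR; apply/idP/imsetP.
  - rewrite inE => /andP[hN /eqP hJ].
    have [_ hj hmax] := Jf_spec a b BR a1 ltac:(lia) bn hN.
    rewrite hJ in hj hmax.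
    have hW : BR \in Wset a b by move: hN; rewrite inE => /andP[].
    case: BR hN hj hmax hW {hJ} => B R hN hj hmax hW.
    have hv : is_BNC B R by move: hW; rewrite inE => /andP[].
    exists (([set x in B | nat_of_ord x.2 <= j], [set x in R | nat_of_ord x.2 <= j]),
            ([set x in B | j < nat_of_ord x.2], [set x in R | j < nat_of_ord x.2])); last first.
      congr pair; apply/setP => x; rewrite !inE; case: (x \in _) => //=;
      by rewrite ltnNge orbN.
    rewrite inE /=; apply/andP; split.
    + rewrite !inE /=; apply/andP; split; first (apply/andP; split).
      * by apply: BNC_sub hv _ _; apply/subsetP => x; rewrite inE => /andP[].
      * apply/withinP => x; rewrite !inE => hx.
        have xC : x \in cl (B, R).
          by move: hx; rewrite /cl !inE => /orP[/andP[-> _]|/andP[-> _]]; rewrite ?orbT.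
        have x2 : nat_of_ord x.2 <= j by move: hx => /orP[/andP[_ ->]|/andP[_ ->]].
        by have [_ _ ? _] := inW _ _ _ x hW xC.
      * case/orP: hj => [->//|hj]; apply/orP; right.
        by move: hj; rewrite /cl !inE ep2 // leqnn !andbT.
    + rewrite !inE /=; apply/andP; split.
      * by apply: BNC_sub hv _ _; apply/subsetP => x; rewrite inE => /andP[].
      * apply/withinP => x; rewrite !inE => hx.
        have xC : x \in cl (B, R).
          by move: hx; rewrite /cl !inE => /orP[/andP[-> _]|/andP[-> _]]; rewrite ?orbT.
        have x2 : j < nat_of_ord x.2 by move: hx => /orP[/andP[_ ->]|/andP[_ ->]].
        have [e1 e2 e3 e4] := inW _ _ _ x hW xC.
        split => //.
        case: (leqP j (nat_of_ord x.1)) => // hlt.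
        case: (eqVneq (nat_of_ord x.1) a) => [x1|x1].
          by have := hmax x xC x1; move: x2; case: (x) => x' x'' /= *; lia.
        have hja : j != a.+1 by move: e3 x1 hlt; case: (x) => x' x'' /= *; apply/eqP; lia.
        move: hj; rewrite (negPf hja) /= => hj.
        case/BNCP: hv => _ _ _ h4.
        have hc : cross (ep a j) x.
          rewrite /cross ep1 // ep2 //; move: e3 x1 hlt x2; case: (x) => x' x'' /= *.
          by apply/orP; left; apply/and3P; split; lia.
        by move: (h4 _ _ hj xC); rewrite hc.
  - case=> [[[B1 R1] [B2 R2]]] /setXP [hp hq] ->.
    have hpW : (B1, R1) \in Wset a j by move: hp; rewrite inE => /andP[].
    have hpc : (j == a.+1) || (ep a j \in cl (B1, R1)) by move: hp; rewrite inE => /andP[].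
    have Wp := fun x => inW _ _ _ x hpW. have Wq := fun x => inW _ _ _ x hq.
    rewrite inE; apply/andP; split; last first.
      apply/eqP; apply: Jf_eq => //; first by lia.
        by case/orP: hpc => [->//|h]; rewrite clU h orbT.
      move=> x; rewrite clU => /orP[xC x1|xC x1].
        by have [] := Wp x xC.
      by have [_ _ e3 _] := Wq x xC; move: e3 x1; case: (x) => x' x'' /= *; lia.
    rewrite /Nset /Wset in_set in_set; apply/andP; split; first (apply/andP; split).
    + exact: (union_ok _ _ _ _ _ hpW hq).
    + apply/withinP => x; rewrite -/(cl (gU ((B1, R1), (B2, R2)))) clU => /orP[xC|xC].
        by have [e1 e2 e3 e4] := Wp x xC; move: e1 e2 e3 e4; case: (x) => x' x'' /= *; lia.
      by have [e1 e2 e3 e4] := Wq x xC; move: e1 e2 e3 e4; case: (x) => x' x'' /= *; lia.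
    + rewrite -/(cl (gU ((B1, R1), (B2, R2)))) clU negb_or; apply/andP; split; apply/negP => xC.
        by have [_ _ _ e4] := Wp _ xC; move: e4; rewrite ep2 //; lia.
      by have [_ _ e3 _] := Wq _ xC; move: e3; rewrite ep1 //; lia.
apply: card_in_imset => [[[B1 R1] [B2 R2]]] [[B1' R1'] [B2' R2']].
move=> /setXP [hp hq] /setXP [hp' hq'] [E1 E2].
have hpW : (B1, R1) \in Wset a j by move: hp; rewrite inE => /andP[].
have hpW' : (B1', R1') \in Wset a j by move: hp'; rewrite inE => /andP[].
have [s1 s2 s3 s4] := sepW _ _ _ _ _ _ _ hpW hq.
have [t1 t2 t3 t4] := sepW _ _ _ _ _ _ _ hpW' hq'.
congr ((_, _), (_, _)).
- by rewrite s1 t1 E1.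
- by rewrite s2 t2 E2.
- by rewrite s3 t3 E1.
- by rewrite s4 t4 E2.
Qed.


Lemma card_Nrec a b : 1 <= a -> a.+1 < b -> b <= n.+1 ->
  #|Nset a b| = \sum_(a.+1 <= j < b) #|Pset a j| * #|Wset j b|.
Proof.
move=> a1 ab bn; rewrite -sum1_card.
transitivity (\sum_(BR in Nset a b) \sum_(a.+1 <= j < b) (if j == Jf a BR then 1 else 0)).
  apply: eq_bigr => BR hBR; rewrite -big_mkcond big_nat1_eq.
  by have [/andP[-> ->] _ _] := Jf_spec a b BR a1 ab bn hBR.
rewrite exchange_big [LHS]big_nat_cond [RHS]big_nat_cond.
apply: eq_bigr => j /andP[/andP[hj1 hj2] _].
rewrite -card_S //; last by apply/andP.
rewrite -big_mkcondr /= -sum1_card; apply: eq_bigl => BR.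
by rewrite [in RHS]in_set eq_sym.
Qed.

End Comb.

Lemma card_Wc n a c : 1 <= a -> a < c -> c <= n.+1 -> ~~ ((a == 1) && (c == n.+1)) ->
  #|Wset n a c| = if c == a.+1 then 2 else 3 * #|Nset n a c|.
Proof.
move=> a1 ac cn nb.
have hac : 1 <= a < c by apply/andP.
rewrite card_Wsplit card_WB // card_WR //.
have an : a <= n.+1 by lia.
case: eqP => [ec|nec].
  have -> : is_diagonal (ep n a c) = false.
    by rewrite /is_diagonal /is_edge ep1 // ep2 // ec eqxx /= andbF.
  by rewrite ec card_N1 //; lia.
have -> : is_diagonal (ep n a c).
  rewrite /is_diagonal /is_edge /is_base /is_arc ep1 // ep2 //.
  move: nb; case: (a == 1); case: (c == n.+1) => //= _; apply/and3P; split => //;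
  try (apply/andP; split; lia); apply/eqP; lia.
lia.
Qed.

Lemma card_Pc n a j : 1 <= a -> a < j -> j <= n ->
  #|Pset n a j| = if j == a.+1 then 2 else 2 * #|Nset n a j|.
Proof.
move=> a1 aj jn.
have hac : 1 <= a < j by apply/andP.
rewrite card_P //; last by lia.
case: eqP => [ej|nej].
  rewrite card_Wc //; [by rewrite ej eqxx | lia | ].
  by apply/negP => /andP[_ /eqP]; lia.
rewrite card_WB //; last by lia.
rewrite card_WR //; last by lia.
have an : a <= n.+1 by lia. have jn' : j <= n.+1 by lia.
have -> : is_diagonal (ep n a j).
  rewrite /is_diagonal /is_edge /is_base /is_arc ep1 // ep2 //.
  apply/and3P; split; try (apply/andP; split; lia); try (apply/negP => /andP[_ /eqP]; lia).
  apply/eqP; lia.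
lia.
Qed.

Lemma Nrec_shift n a L : 1 <= a -> 1 < L -> a + L <= n.+1 ->
  #|Nset n a (a + L)| = \sum_(1 <= k < L)
     (if k == 1 then 2 else 2 * #|Nset n a (a + k)|) *
     (if L - k == 1 then 2 else 3 * #|Nset n (a + k) (a + L)|).
Proof.
move=> a1 L1 aL.
rewrite card_Nrec //; try lia.
rewrite -{1}(add1n a) big_addn.
have -> : a + L - a = L by lia.
apply: eq_big_nat => k /andP[k1 kL].
rewrite card_Pc //; try lia. rewrite card_Wc //; try lia.
  have -> : (k + a == a.+1) = (k == 1) by apply/eqP/eqP; lia.
  have -> : (a + L == (k + a).+1) = (L - k == 1) by apply/eqP/eqP; lia.
  by rewrite (addnC k a).
Qed.

Lemma NN_inv L : forall n a, 1 <= a -> 1 <= L -> a + L <= n.+1 ->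
  #|Nset n a (a + L)| = #|Nset L 1 (1 + L)|.
Proof.
elim/ltn_ind: L => L IH n a a1 L1 aL.
case: (eqVneq L 1) => [->|L2].
  by rewrite !addn1 !card_N1 //; lia.
have L2' : 1 < L by lia.
rewrite Nrec_shift // (Nrec_shift L 1 L) //.
apply: eq_big_nat => k /andP[k1 kL].
rewrite IH //; try lia. rewrite (IH k) //; try lia.
have -> : a + L = (a + k) + (L - k) by lia.
have -> : 1 + L = (1 + k) + (L - k) by lia.
rewrite IH //; try lia. rewrite (IH (L - k) _ L (1 + k)) //; try lia.
Qed.

Lemma h_F L : 1 < L -> h L = 2 * #|Nset L 1 (1 + L)|.
Proof.
case: L => [|[|l]] // _.
have -> : h l.+2 = #|Wset l.+2 1 l.+3|.
  rewrite /h; apply: eq_card => -[B R]; rewrite !inE /=.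
  case hv: (is_BNC B R) => //=; apply/esym/withinP => x xC.
  have [h1 h2] := arc_of _ _ _ _ hv xC.
  by split => //; case: (x) => x1 [x2 hx2] /=; lia.
rewrite card_Wsplit card_WB // card_WR //.
have -> : is_diagonal (ep l.+2 1 l.+3) = false.
  by rewrite /is_diagonal /is_base ep1 // ep2 // !eqxx /= !andbF.
by rewrite addn0 addnn -mul2n.
Qed.

Lemma h_rec L : 1 < L ->
  h L = \sum_(1 <= k < L) (h k + (k == 1)) * (3 * h (L - k) + (L - k == 1)).
Proof.
move=> L1; rewrite h_F // (Nrec_shift L 1 L) //.
rewrite big_distrr /=; apply: eq_big_nat => k /andP[k1 kL].
rewrite (NN_inv k L 1) //; try lia.
have -> : 1 + L = (1 + k) + (L - k) by lia.
rewrite (NN_inv (L - k) L (1 + k)) //; try lia.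
have h1 : h 1 = 1 by [].
case: (eqVneq (L - k) 1) => [e|m2]; case: (eqVneq k 1) => [ek|k2].
- rewrite e ek h1 /=; lia.
- rewrite e h1 /= (h_F k) //; last by lia. set N := #|Nset k 1 (1 + k)|. rewrite addn0 muln1 -!mulnA mulnC -!mulnA. by [].
- rewrite ek h1 /= (h_F (L - 1)) //; try lia. by rewrite addn0 !mulnA.
- by rewrite (h_F k) // ?(h_F (L - k)) //; lia.
Qed.

Lemma h_nat m : 1 < m ->
  h m = 3 * (\sum_(i < m.+1) h i * h (m - i)) + 4 * h m.-1 + (m == 2).
Proof.
move=> m1.
have h0 : h 0 = 0 by [].
have e1 : \sum_(i < m.+1) h i * h (m - i) = \sum_(1 <= k < m) h k * h (m - k).
  rewrite -(big_mkord (fun=> true) (fun i => h i * h (m - i))) big_ltn // big_nat_recr /=; last by lia.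
  by rewrite mul0n add0n subnn h0 muln0 addn0.
have e2 : \sum_(1 <= k < m) (h k + (k == 1)) * (3 * h (m - k) + (m - k == 1)) =
  \sum_(1 <= k < m) (h k * h (m - k) + (h k * h (m - k) + h k * h (m - k)) + ((if k == m.-1 then h k else 0) +
     ((if k == 1 then 3 * h (m - 1) else 0) + (if k == 1 then nat_of_bool (m == 2) else 0)))).
  apply: eq_big_nat => k /andP[k1 km].
  have -> : (m - k == 1) = (k == m.-1) by apply/eqP/eqP; lia.
  case: (eqVneq k 1) => [ek|k2]; case: (eqVneq k m.-1) => [ekm|km1] /=.
  - have m2 : m = 2 by lia.
    by rewrite ek m2 /=; lia.
  - have m2 : m != 2 by apply/eqP; lia.
    by rewrite ek (negPf m2); lia.
  - by rewrite ekm; lia.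
  - by lia.
rewrite (h_rec m) // e2 !big_split /= -e1 -!big_mkcond !big_nat1_eq.
have -> : 1 <= m.-1 < m by apply/andP; split; lia.
have -> : 1 <= 1 < m by apply/andP; split; lia.
rewrite subn1. set S := \sum_(i < m.+1) h i * h (m - i). set H1 := h m.-1. lia.
Qed.

Import GRing.Theory Num.Theory.
Local Open Scope ring_scope.

Lemma fX_mul (f : fps) m : fps_mul fps_X f m = if m is k.+1 then f k else 0.
Proof.
rewrite /fps_mul; case: m => [|k].
  by rewrite big_ord_recl big_ord0 /fps_X /= mul0r addr0.
rewrite big_ord_recl big_ord_recl /= /fps_X /bump /= mul0r mul1r add0r subSS subn0.
by rewrite big1 ?addr0 // => i _; rewrite /bump /= mul0r.
Qed.

Lemma fc1_mul (f : fps) m : fps_mul (fps_const 1) f m = f m.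
Proof.
rewrite /fps_mul big_ord_recl /fps_const /= mul1r subn0 big1 ?addr0 // => i _; by rewrite mul0r.
Qed.

Lemma fadd_mul (f g H : fps) m : fps_mul (fps_add f g) H m = fps_mul f H m + fps_mul g H m.
Proof. by rewrite /fps_mul /fps_add -big_split /=; apply: eq_bigr => i _; rewrite mulrDl. Qed.

Lemma fopp_mul (f H : fps) m : fps_mul (fps_opp f) H m = - fps_mul f H m.
Proof. by rewrite /fps_mul /fps_opp -sumrN; apply: eq_bigr => i _; rewrite mulNr. Qed.

Lemma fscale_mul c (f H : fps) m : fps_mul (fps_scale c f) H m = c * fps_mul f H m.
Proof. by rewrite /fps_mul /fps_scale mulr_sumr; apply: eq_bigr => i _; rewrite mulrA. Qed.

Lemma HH m : fps_mul Hser Hser m = Posz (\sum_(i < m.+1) h i * h (m - i))%N.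
Proof.
rewrite /fps_mul /Hser; apply/esym; elim/big_rec2: _ => // i a b _ <-.
by rewrite PoszD PoszM.
Qed.

Local Close Scope ring_scope.

Theorem proposition2p9 :
  fps_add
    (fps_add
       (fps_add (fps_opp fps_X) (fps_opp (fps_mul fps_X fps_X)))
       (fps_mul (fps_add (fps_const 1) (fps_opp (fps_scale 4 fps_X))) Hser))
    (fps_opp (fps_scale 3 (fps_mul Hser Hser)))
  = fps_zero.
Proof.
apply: functional_extensionality => m.
rewrite /fps_add /fps_opp /fps_scale /fps_zero.
rewrite fadd_mul fopp_mul fscale_mul fc1_mul !fX_mul HH.
case: m => [|[|k]].
- by rewrite big_ord_recl big_ord0 /Hser /fps_X /=.
- by rewrite big_ord_recl big_ord_recl big_ord0 /Hser /fps_X /=.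
- have := h_nat k.+2 isT.
  rewrite /Hser /fps_X !eqSS.
  set S := (\sum_(i < k.+3) h i * h (k.+2 - i))%N.
  set A := h k.+2. set B := h k.+1.
  case: (k == 0%N) => H; move: H; rewrite /=; lia.
Qed.
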